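(* Let $\mathcal{T}=\langle\Sigma^*\times\mathcal{M},Q,I,F,\Delta\rangle$ be a real-time monoidal finite-state transducer with output monoid $\mathcal{M}=\langle M,\circ,e\rangle$. Let $\mathcal{A}^{sq}=\langle\mathcal{M}\times\mathcal{M},Q\times Q,I\times I,F\times F,\Delta_{sq}\rangle$ where $\Delta_{sq}=\{\langle\langle p_1,p_2\rangle,\langle m_1,m_2\rangle,\langle q_1,q_2\rangle\rangle:\exists a\in\Sigma\ \langle p_i,\langle a,m_i\rangle,q_i\rangle\in\Delta\text{ for }i=1,2\}$. Then $\mathcal{A}^{sq}$ is a squared output automaton for $\mathcal{T}$.
   Context: A real-time monoidal finite-state transducer has finite $\Delta\subseteq Q\times(\Sigma\times M)\times Q$. For a monoidal automaton with transition relation $\Delta$ over a monoid with unit $e$, the generalized transition relation $\Delta^*$ is the least set containing $\langle q,e,q\rangle$ for every state $q$ and closed under: $\langle q_1,w,q_2\rangle\in\Delta^*$, $\langle q_2,a,q_3\rangle\in\Delta$ imply $\langle q_1,w\circ a,q_3\rangle\in\Delta^*$ (for the transducer the unit is $\langle\varepsilon,e\rangle$; for $\mathcal{M}\times\mathcal{M}$ it is $\langle e,e\rangle$ with componentwise product). A monoidal automaton $\langle\mathcal{M}\times\mathcal{M},Q\times Q,I\times I,F\times F,\Delta_2\rangle$ with finite $\Delta_2$ is a squared output automaton for $\mathcal{T}$ if for all $p_1,p_2,q_1,q_2\in Q$ and $m,n\in M$: $\langle\langle p_1,p_2\rangle,\langle m,n\rangle,\langle q_1,q_2\rangle\rangle\in\Delta_2^*$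 iff there is $u\in\Sigma^*$ with $\langle p_1,\langle u,m\rangle,q_1\rangle\in\Delta^*$ and $\langle p_2,\langle u,n\rangle,q_2\rangle\in\Delta^*$. *)

(* Defs.v *)
From Stdlib Require Import List FinFun.
Import ListNotations.
Set Implicit Arguments.

Definition is_monoid (M : Type) (op : M -> M -> M) (e : M) : Prop :=
  (forall x y z, op (op x y) z = op x (op y z)) /\
  (forall x, op e x = x) /\ (forall x, op x e = x).

Definition finite_rel (A B C : Type) (R : A -> B -> C -> Prop) : Prop :=
  exists l : list (A * B * C), forall a b c, R a b c <-> In (a, b, c) l.

Record monoidal_automaton (L S : Type) := MkMA {
  ma_init : S -> Prop;
  ma_final : S -> Prop;
  ma_delta : S -> L -> S -> Prop }.

Inductive gen_trans (L S : Type) (op : L -> L -> L) (unit : L)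
    (D : S -> L -> S -> Prop) : S -> L -> S -> Prop :=
| gt_refl q : gen_trans op unit D q unit q
| gt_step q1 w q2 a q3 :
    gen_trans op unit D q1 w q2 -> D q2 a q3 -> gen_trans op unit D q1 (op w a) q3.

Record rt_transducer (Sigma Q M : Type) := MkRT {
  t_init : Q -> Prop;
  t_final : Q -> Prop;
  t_delta : Q -> Sigma * M -> Q -> Prop }.

Definition rt_transducer_ok (Sigma Q M : Type) (op : M -> M -> M) (e : M)
    (T : rt_transducer Sigma Q M) : Prop :=
  Finite Sigma /\ Finite Q /\ is_monoid op e /\ finite_rel (t_delta T).

Definition tmul (Sigma M : Type) (op : M -> M -> M)
    (x y : list Sigma * M) : list Sigma * M :=
  (fst x ++ fst y, op (snd x) (snd y)).

Definition t_delta_word (Sigma Q M : Type) (T : rt_transducer Sigma Q M)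
    (p : Q) (x : list Sigma * M) (q : Q) : Prop :=
  exists a, fst x = [a] /\ t_delta T p (a, snd x) q.

Definition t_star (Sigma Q M : Type) (op : M -> M -> M) (e : M)
    (T : rt_transducer Sigma Q M) : Q -> list Sigma * M -> Q -> Prop :=
  gen_trans (tmul op) ([], e) (t_delta_word T).

Definition pmul (M : Type) (op : M -> M -> M) (x y : M * M) : M * M :=
  (op (fst x) (fst y), op (snd x) (snd y)).

Definition squared_output_automaton (Sigma Q M : Type) (op : M -> M -> M) (e : M)
    (T : rt_transducer Sigma Q M) (A : monoidal_automaton (M * M) (Q * Q)) : Prop :=
  (forall p, ma_init A p <-> t_init T (fst p) /\ t_init T (snd p)) /\
  (forall p, ma_final A p <-> t_final T (fst p) /\ t_final T (snd p)) /\
  finite_rel (ma_delta A) /\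
  (forall p1 p2 q1 q2 m n,
     gen_trans (pmul op) (e, e) (ma_delta A) (p1, p2) (m, n) (q1, q2) <->
     exists u : list Sigma,
       t_star op e T p1 (u, m) q1 /\ t_star op e T p2 (u, n) q2).

Definition delta_sq (Sigma Q M : Type) (T : rt_transducer Sigma Q M)
    (p : Q * Q) (m : M * M) (q : Q * Q) : Prop :=
  exists a : Sigma, t_delta T (fst p) (a, fst m) (fst q) /\
                    t_delta T (snd p) (a, snd m) (snd q).

Definition A_sq (Sigma Q M : Type) (T : rt_transducer Sigma Q M)
  : monoidal_automaton (M * M) (Q * Q) :=
  MkMA (fun p => t_init T (fst p) /\ t_init T (snd p))
       (fun p => t_final T (fst p) /\ t_final T (snd p))
       (delta_sq T).

(* Main.v *)
Require Import Defs.
From Stdlib Require Import List FinFun Classical.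
Import ListNotations.
Set Implicit Arguments.

Lemma filter_ex (A : Type) (L : list A) : forall (P : A -> Prop),
  (forall x, P x -> In x L) -> exists l, forall x, P x <-> In x l.
Proof.
  induction L as [|a L IH]; intros P H.
  - exists []. intros x; split; [apply H|intros []].
  - destruct (IH (fun x => P x /\ x <> a)) as [l Hl].
    { intros x [Px Hx]. destruct (H x Px); [congruence|auto]. }
    destruct (classic (P a)) as [Pa|nPa].
    + exists (a :: l). intros x. simpl. rewrite <- Hl. split.
      * intros Px. destruct (classic (x = a)); [left; congruence|right; auto].
      * intros [<-|[]]; auto.
    + exists l. intros x. rewrite <- Hl. split.
      * intros Px; split; auto; intros ->; auto.
      * intros []; auto.
Qed.

Lemma fwd (Sigma Q M : Type) (op : M -> M -> M) (e : M)
    (T : rt_transducer Sigma Q M) P w R :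
  gen_trans (pmul op) (e, e) (delta_sq T) P w R ->
  exists u, t_star op e T (fst P) (u, fst w) (fst R) /\
            t_star op e T (snd P) (u, snd w) (snd R).
Proof.
  induction 1 as [q|q1 w q2 a q3 H IH D].
  - exists []. split; constructor.
  - destruct IH as [u [H1 H2]]. destruct D as [x [D1 D2]].
    exists (u ++ [x]). split.
    + change (u ++ [x], fst (pmul op w a)) with (tmul op (u, fst w) ([x], fst a)).
      econstructor; [exact H1|]. exists x; auto.
    + change (u ++ [x], snd (pmul op w a)) with (tmul op (u, snd w) ([x], snd a)).
      econstructor; [exact H2|]. exists x; auto.
Qed.

Lemma t_star_nil (Sigma Q M : Type) (op : M -> M -> M) (e : M)
    (T : rt_transducer Sigma Q M) p x q :
  t_star op e T p x q -> fst x = [] -> snd x = e /\ q = p.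
Proof.
  destruct 1 as [|q1 w q2 a q3 H D]; simpl; auto.
  destruct D as [b [Hb _]]. unfold tmul; simpl. rewrite Hb.
  intros Hc. destruct (fst w); discriminate.
Qed.

Lemma t_star_snoc (Sigma Q M : Type) (op : M -> M -> M) (e : M)
    (T : rt_transducer Sigma Q M) p x q :
  t_star op e T p x q -> forall u a, fst x = u ++ [a] ->
  exists w b q', t_star op e T p (u, w) q' /\ t_delta T q' (a, b) q /\ snd x = op w b.
Proof.
  destruct 1 as [|q1 w q2 a q3 H D]; simpl; intros u c Hc.
  - destruct u; discriminate.
  - destruct D as [b [Hb Db]]. rewrite Hb in Hc.
    apply app_inj_tail in Hc as [Hu Hbc]. subst.
    exists (snd w), (snd a), q2. destruct w; simpl in *; auto.
Qed.

Lemma bwd (Sigma Q M : Type) (op : M -> M -> M) (e : M)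
    (T : rt_transducer Sigma Q M) p1 x q1 :
  t_star op e T p1 x q1 -> forall p2 n q2, t_star op e T p2 (fst x, n) q2 ->
  gen_trans (pmul op) (e, e) (delta_sq T) (p1, p2) (snd x, n) (q1, q2).
Proof.
  induction 1 as [q|q1 w q2 a q3 H IH D]; intros p2 n r2 H2.
  - apply t_star_nil in H2 as [Hn Hq]; [|reflexivity]. simpl in Hn. subst. constructor.
  - destruct D as [b [Hb Db]].
    destruct (t_star_snoc H2 (fst w) b) as [w' [b' [q' [H3 [D3 Hn]]]]].
    { simpl. unfold tmul. rewrite Hb. reflexivity. }
    simpl in Hn. subst n.
    change (snd (tmul op w a), op w' b') with (pmul op (snd w, w') (snd a, b')).
    econstructor.
    + apply IH. exact H3.
    + exists b. simpl. auto.
Qed.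

Theorem proposition2 (Sigma Q M : Type) (op : M -> M -> M) (e : M)
    (T : rt_transducer Sigma Q M) :
  rt_transducer_ok op e T ->
  squared_output_automaton op e T (A_sq T).
Proof.
  intros [_ [_ [_ [L HL]]]].
  split; [intros; simpl; tauto|].
  split; [intros; simpl; tauto|].
  split.
  - edestruct (filter_ex (map (fun t : (Q * (Sigma * M) * Q) * (Q * (Sigma * M) * Q) =>
        match t with ((p1, (_, m1), q1), (p2, (_, m2), q2)) =>
          ((p1, p2), (m1, m2), (q1, q2)) end) (list_prod L L))
       (fun t => match t with (p, m, q) => delta_sq T p m q end)) as [l Hl];
    [|exists l; intros a b c; exact (Hl (a, b, c))].
    intros [[p m] q] [a [D1 D2]].
    apply in_map_iff.
    exists ((fst p, (a, fst m), fst q), (snd p, (a, snd m), snd q)).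
    split.
    + destruct p, m, q; reflexivity.
    + apply in_prod; apply HL; auto.
  - intros p1 p2 q1 q2 m n. split.
    + intros H. apply fwd in H. exact H.
    + intros [u [H1 H2]]. exact (bwd H1 H2).
Qed.
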